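(* For positive integers $d,n$ let $P^{d,n}$ be the class of simple graphs on $n$ vertices that admit a faithful orthogonal representation in $\mathbb{R}^d$. The graph property $P^{d,n}$ is not monotone-decreasing: there exist $d, n$, a graph $G \in P^{d,n}$ and an edge $uv$ of $G$ such that the graph $G \setminus uv$ obtained by deleting the edge $uv$ is not in $P^{d,n}$.
   Context: All graphs are finite, simple and undirected. A faithful orthogonal representation of a graph $G$ in $\mathbb{R}^d$ is an assignment of unit vectors $v \mapsto |v\rangle \in \mathbb{R}^d$ to the vertices such that two vertices are adjacent iff their vectors are orthogonal, and distinct vertices are assigned distinct vectors. A graph property is monotone-decreasing if it is closed under removal of edges (and vertices). *)

(* Defs.v *)
From HB Require Import structures.
From mathcomp Require Import all_boot all_order all_algebra.
From mathcomp Require Import Rstruct.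
From Stdlib Require Rdefinitions.
Notation R := Rdefinitions.R.

Set Implicit Arguments.
Unset Strict Implicit.
Unset Printing Implicit Defensive.

Import Order.TTheory GRing.Theory Num.Theory.
Local Open Scope ring_scope.

Definition simple_graph (n : nat) (adj : rel 'I_n) : Prop :=
  (forall x y, adj x y = adj y x) /\ (forall x, adj x x = false).

Definition dotv (d : nat) (u v : 'rV[R]_d) : R := \sum_(k < d) u 0 k * v 0 k.

Definition faithful_orth_rep (d n : nat) (adj : rel 'I_n)
    (f : 'I_n -> 'rV[R]_d) : Prop :=
  [/\ (forall x, dotv (f x) (f x) = 1),
      (forall x y, x != y -> (adj x y <-> dotv (f x) (f y) = 0)) &
      injective f].

Definition inP (d n : nat) (adj : rel 'I_n) : Prop :=
  simple_graph adj /\ exists f : 'I_n -> 'rV[R]_d, @faithful_orth_rep d n adj f.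

Definition delete_edge (n : nat) (adj : rel 'I_n) (u v : 'I_n) : rel 'I_n :=
  fun x y => adj x y && ~~ (((x == u) && (y == v)) || ((x == v) && (y == u))).

(* Main.v *)
Require Import Defs.
From mathcomp Require Import all_boot all_order all_algebra.
From mathcomp Require Import Rstruct.
From mathcomp Require Import ring lra.

Import Order.TTheory GRing.Theory Num.Theory.
Local Open Scope ring_scope.

Lemma dot2 (u v : 'rV[R]_2) : dotv u v = u 0 0 * v 0 0 + u 0 1 * v 0 1.
Proof.
rewrite /dotv !big_ord_recl big_ord0 addr0.
have -> : lift ord0 ord0 = 1 :> 'I_2 by apply: val_inj.
by [].
Qed.

Lemma key (a b c e : 'rV[R]_2) :
  dotv b b = 1 -> dotv c c = 1 -> dotv a b = 0 -> dotv c b = 0 ->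
  dotv e c = 0 -> dotv a e = 0.
Proof.
rewrite !dot2.
set a0 := a 0 0; set a1 := a 0 1; set b0 := b 0 0; set b1 := b 0 1.
set c0 := c 0 0; set c1 := c 0 1; set e0 := e 0 0; set e1 := e 0 1.
move=> hB hC hAB hCB hDC.
pose t := c1 * b0 - c0 * b1.
pose w := b0 * e1 - b1 * e0.
have hw : w = 0.
  have H : w * ((c0 * c0 + c1 * c1) * (b0 * b0 + b1 * b1)) =
    t * ((e0 * c0 + e1 * c1) * (b0 * b0 + b1 * b1)
         - (c0 * b0 + c1 * b1) * (b0 * e0 + b1 * e1))
    + w * (c0 * b0 + c1 * b1) ^+ 2 by rewrite /w /t; ring.
  rewrite hB hC hDC hCB in H.
  by transitivity (w * (1 * 1)); [ring | rewrite H; ring].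
have H : (a0 * e0 + a1 * e1) * (b0 * b0 + b1 * b1) =
  (a0 * b0 + a1 * b1) * (b0 * e0 + b1 * e1) + (a1 * b0 - a0 * b1) * w
  by rewrite /w; ring.
rewrite hB hAB hw in H.
by transitivity ((a0 * e0 + a1 * e1) * 1); [ring | rewrite H; ring].
Qed.

Definition adj4 : rel 'I_4 := fun x y => odd (x + y).

Definition cs (x : nat) : R := if x == 0%N then 1 else if x == 2%N then -1 else 0.
Definition sn (x : nat) : R := if x == 1%N then 1 else if x == 3%N then -1 else 0.
Definition f4 (x : 'I_4) : 'rV[R]_2 :=
  \row_(k < 2) (if k == 0 then cs x else sn x).

Lemma f4dot x y : dotv (f4 x) (f4 y) = cs x * cs y + sn x * sn y.
Proof. by rewrite dot2 !mxE. Qed.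

Lemma inP4 : @inP 2 4 adj4.
Proof.
split.
  split; first by move=> x y; rewrite /adj4 addnC.
  by move=> x; rewrite /adj4 addnn odd_double.
exists f4; split.
- move=> x; rewrite f4dot; case: x => [[|[|[|[|m]]]] Hm] //=; rewrite /cs /sn /=; lra.
- move=> x y; rewrite f4dot /adj4.
  case: x => [[|[|[|[|m]]]] Hm] //; case: y => [[|[|[|[|k]]]] Hk] //=;
  rewrite /cs /sn /= => _; split => //; lra.
- move=> x y /matrixP H.
  have H0 := H 0 0; have H1 := H 0 1; rewrite !mxE /= in H0 H1; clear H.
  apply: val_inj.
  case: x H0 H1 => [[|[|[|[|m]]]] Hm] //; case: y => [[|[|[|[|k]]]] Hk] //=;
  rewrite /cs /sn /= => H0 H1; exfalso; lra.
Qed.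

Theorem mainTheorem3 :
  exists (d n : nat), (0 < d)%N /\ (0 < n)%N /\
    exists (adj : rel 'I_n) (u v : 'I_n),
      @inP d n adj /\ adj u v /\ ~ @inP d n (delete_edge adj u v).
Proof.
exists 2%N, 4%N; split => //; split => //.
exists adj4, (@Ordinal 4 0 isT), (@Ordinal 4 3 isT).
split; first exact: inP4.
split => //.
move=> [_ [f [hn hadj _]]].
set o0 := @Ordinal 4 0 isT; set o1 := @Ordinal 4 1 isT.
set o2 := @Ordinal 4 2 isT; set o3 := @Ordinal 4 3 isT.
have E x y : x != y -> delete_edge adj4 o0 o3 x y -> dotv (f x) (f y) = 0.
  by move=> nxy h; apply/(hadj x y nxy).
have h01 := E o0 o1 isT isT.
have h21 := E o2 o1 isT isT.
have h32 := E o3 o2 isT isT.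
have := @key (f o0) (f o1) (f o2) (f o3) (hn o1) (hn o2) h01 h21 h32.
move/(proj2 (hadj o0 o3 isT)).
by rewrite /delete_edge !eqxx /=.
Qed.
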